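(* Let $S,T\subseteq\mathbb{Z}_{>0}$ be finite and $x\in T\triangleleft S$. If $T_{<x}\setminus(T\triangleleft S)$ is empty, then $(T\setminus\{x\})\triangleleft S=(T\triangleleft S)\setminus\{x\}$. Otherwise, $(T\setminus\{x\})\triangleleft S=((T\triangleleft S)\setminus\{x\})\cup\{x'\}$, where $x'=\max(T_{<x}\setminus(T\triangleleft S))$.
   Context: For a finite set $T\subseteq\mathbb{Z}_{>0}$, $T_{<x}=\{t\in T:t<x\}$. For finite $S,T\subseteq\mathbb{Z}_{>0}$, $T\triangleleft S$ is computed by going through the elements of $S$ from largest to smallest; each $s$ picks the largest element of $T$ that is less than $s$ and not yet picked (if one exists); $T\triangleleft S$ is the set of picked elements. *)

(* Defs.v *)
From mathcomp Require Import all_boot all_order.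
From mathcomp Require Import finmap.
Set Implicit Arguments. Unset Strict Implicit. Unset Printing Implicit Defensive.
Local Open Scope fset_scope.

Definition fset_lt (T : {fset nat}) (x : nat) : {fset nat} :=
  [fset t in T | t < x].

(* maximum of a finite set of naturals (meaningful when nonempty) *)
Definition fmax (A : {fset nat}) : nat := \max_(t <- A) t.

(* One step: element s picks the largest element of T less than s and
   not yet picked (if one exists); P is the set picked so far. *)
Definition pick_step (T : {fset nat}) (P : {fset nat}) (s : nat) : {fset nat} :=
  let C := [fset t in T | (t < s) && (t \notin P)] in
  if C == fset0 then P else fmax C |` P.

Definition tri (T S : {fset nat}) : {fset nat} :=
  foldl (pick_step T) fset0 (sort geq (enum_fset S)).

Definition pos_set (A : {fset nat}) : Prop := forall a, a \in A -> 0 < a.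

(* Main.v *)
Require Import Defs.
From mathcomp Require Import all_boot all_order.
From mathcomp Require Import finmap.
Local Open Scope fset_scope.

Section Helpers.
Local Set Implicit Arguments.
Local Unset Strict Implicit.

Lemma max_in_seq (s : seq nat) : s != [::] -> \max_(t <- s) t \in s.
Proof.
elim: s => [//|a s IH] _.
rewrite big_cons inE.
case: s IH => [|b s] IH; first by rewrite big_nil maxn0 eqxx.
have /IH H : b :: s != [::] by [].
case: (leqP a (\max_(t <- b :: s) t)) => h.
  by rewrite H orbT.
by rewrite eqxx.
Qed.

Lemma fmax_eq (C : {fset nat}) m :
  m \in C -> (forall t, t \in C -> t <= m) -> fmax C = m.
Proof.
move=> mC Hm; apply/eqP; rewrite eqn_leq; apply/andP; split.
  by apply/bigmax_leqP_seq => i iC _; apply: Hm.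
exact: (@leq_bigmax_seq _ (enum_fset C) xpredT (fun t => t) m mC).
Qed.

Lemma fmax_spec (C : {fset nat}) : C != fset0 ->
  fmax C \in C /\ (forall t, t \in C -> t <= fmax C).
Proof.
move=> HC; split.
  apply: max_in_seq.
  case/fset0Pn: HC => y yC; apply/eqP => E.
  by move: yC; rewrite -[y \in C]/(y \in enum_fset C) E.
by move=> t tC; exact: (@leq_bigmax_seq _ (enum_fset C) xpredT (fun t => t) t tC).
Qed.

Definition maxspec (T P : {fset nat}) (s m : nat) :=
  [/\ m \in T, m < s, m \notin P & forall t, t \in T -> t < s -> t \notin P -> t <= m].

Lemma pickP' (T P : {fset nat}) (s : nat) :
  (forall t, t \in T -> t < s -> t \in P) \/ exists m, maxspec T P s m.
Proof.
set C := [fset t in T | (t < s) && (t \notin P)].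
case: (boolP (C == fset0)) => HC.
  left => t tT ts; apply/negPn/negP => tP.
  have : t \in C by rewrite !inE tT ts tP.
  by rewrite (eqP HC) inE.
right; exists (fmax C).
have [H1 H2] := fmax_spec HC.
move: H1; rewrite !inE => /andP [H1 /andP [H3 H4]]; split => // t tT ts tP.
by apply: H2; rewrite !inE tT ts tP.
Qed.

Lemma pick_step_none (T P : {fset nat}) s :
  (forall t, t \in T -> t < s -> t \in P) -> pick_step T P s = P.
Proof.
move=> H; rewrite /pick_step.
suff -> : [fset t in T | (t < s) && (t \notin P)] == fset0 by [].
apply/eqP/fsetP => t; rewrite !inE.
case tT: (t \in T) => //=; case ts: (t < s) => //=.
by rewrite H.
Qed.

Lemma pick_step_some (T P : {fset nat}) s m :
  maxspec T P s m -> pick_step T P s = m |` P.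
Proof.
case=> mT ms mP mmax; rewrite /pick_step.
set C := [fset t in T | (t < s) && (t \notin P)].
have mC : m \in C by rewrite !inE mT ms mP.
have HC : C != fset0 by apply/fset0Pn; exists m.
rewrite (negbTE HC) (fmax_eq mC) // => t.
by rewrite !inE => /andP [tT /andP [ts tP]]; apply: mmax.
Qed.

Definition fF (T : {fset nat}) (x : nat) (P : {fset nat}) : {fset nat} :=
  if x \in P then
    (let D := fset_lt T x `\` P in
     if D == fset0 then P `\ x else (P `\ x) `|` [fset fmax D])
  else P.

Lemma fE_notin T x P : x \notin P -> fF T x P = P.
Proof. by rewrite /fF => /negbTE ->. Qed.

Lemma fE_none T x P : x \in P -> (forall t, t \in T -> t < x -> t \in P) ->
  fF T x P = P `\ x.
Proof.
move=> xP H; rewrite /fF xP /=.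
suff -> : fset_lt T x `\` P == fset0 by [].
apply/eqP/fsetP => t; rewrite /fset_lt !inE.
case tT: (t \in T); case ts: (t < x); rewrite ?andbF //=.
by rewrite H.
Qed.

Lemma fE_some T x P d : x \in P -> maxspec T P x d ->
  fF T x P = (P `\ x) `|` [fset d].
Proof.
move=> xP [dT dx dP dmax]; rewrite /fF xP /=.
set D := fset_lt T x `\` P.
have dD : d \in D by rewrite /D /fset_lt !inE dT dx dP.
have HD : D != fset0 by apply/fset0Pn; exists d.
rewrite (negbTE HD) (fmax_eq dD) // => t.
rewrite /D /fset_lt !inE => /andP [tP /andP [tT tx]]; exact: dmax.
Qed.

Lemma f_sub T x P t : t \in P -> t != x -> t \in fF T x P.
Proof.
move=> tP tx; rewrite /fF; case: (x \in P) => //.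
by case: (_ == fset0); rewrite !inE tP tx.
Qed.

Lemma step_inv T x P a :
  pick_step (T `\ x) (fF T x P) a = fF T x (pick_step T P a).
Proof.
case: (pickP' T P a) => [Hnone | [c [cT ca cP cmax]]].
  rewrite (pick_step_none Hnone) pick_step_none // => t.
  rewrite !inE => /andP [tx tT] ta; apply: f_sub => //; exact: Hnone.
rewrite (@pick_step_some T P a c) //.
case: (boolP (x \in P)) => xP.
  have cx : c != x by apply/eqP => E; rewrite E xP in cP.
  case: (pickP' T P x) => [Dnone | [d [dT dx dP dmax]]].
    rewrite (fE_none xP Dnone) fE_none; first last.
    - by move=> t tT tx; rewrite inE Dnone ?orbT.
    - by rewrite inE xP orbT.
    rewrite (@pick_step_some _ _ _ c); last first.
      split; first by rewrite !inE cx cT.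
      - by [].
      - by rewrite !inE negb_and cP orbT.
      move=> t; rewrite !inE => /andP [tx tT] ta; rewrite negb_and tx /= => tP.
      exact: cmax.
    by apply/fsetP => t; rewrite !inE; case: (t =P c) => [->|]; rewrite ?cx.
  have dx' : d != x by rewrite neq_ltn dx.
  rewrite (@fE_some T x P d) //.
  case: (c =P d) => [E | /eqP cd].
    subst c.
    case: (pickP' (T `\ x) (P `\ x `|` [fset d]) a) => [Enone | [e [eT ea eQ emax]]].
      rewrite (pick_step_none Enone) fE_none; first last.
      - move=> t tT tx; rewrite !inE.
        case: (boolP (t \in P)) => tP; first by rewrite orbT.
        have := dmax t tT tx tP; rewrite leq_eqVlt => /orP [->//|td].
        have : t \in P `\ x `|` [fset d].
          apply: Enone; last exact: ltn_trans td ca.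
          by rewrite !inE tT andbT neq_ltn tx.
        by rewrite !inE (negbTE tP) andbF /= => ->.
      - by rewrite !inE xP orbT.
      apply/fsetP => t; rewrite !inE.
      by case: (t =P d) => [->|]; rewrite ?dx' ?andbT ?orbT ?orbF.
    move: eT eQ; rewrite !inE => /andP [ex eT].
    rewrite ex /= negb_or => /andP [eP ed].
    have ed' : e < d by rewrite ltn_neqAle ed cmax.
    rewrite (@pick_step_some _ _ _ e); last by split => //; rewrite !inE ?ex ?eT /= ?(negbTE eP) ?(negbTE ed).
    rewrite (@fE_some _ _ _ e); first last.
    - split => //; first exact: ltn_trans ed' dx.
        by rewrite !inE negb_or ed.
      move=> t tT tx; rewrite !inE negb_or => /andP [td tP].
      have tlt : t < d by rewrite ltn_neqAle td dmax.
      apply: emax; first by rewrite !inE tT andbT neq_ltn tx.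
        exact: ltn_trans tlt ca.
      by rewrite !inE negb_or negb_and tP orbT.
    - by rewrite !inE xP orbT.
    apply/fsetP => t; rewrite !inE.
    case: (t =P d) => [->|]; rewrite ?dx' ?orbT //=.
    by case: (t =P e) => [->|]; rewrite ?orbT ?orbF.
  rewrite (@pick_step_some _ _ _ c); last first.
    split; first by rewrite !inE cx cT.
    - by [].
    - by rewrite !inE negb_or negb_and cP cd orbT.
    move=> t; rewrite !inE => /andP [tx tT] ta; rewrite negb_or negb_and tx /=.
    by move=> /andP [tP _]; exact: cmax.
  rewrite (@fE_some _ _ _ d); first last.
  - split => //; first by rewrite !inE negb_or dP eq_sym cd.
    by move=> t tT tx; rewrite !inE negb_or => /andP [_ tP]; exact: dmax.
  - by rewrite !inE xP orbT.
  apply/fsetP => t; rewrite !inE.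
  by case: (t =P c) => [->|]; rewrite ?cx ?orbT //=.
rewrite (fE_notin _ xP).
case: (c =P x) => [E | /eqP cx].
  subst c.
  case: (pickP' T (x |` P) x) => [Dnone | [d [dT dx dP dmax]]].
    have xin : x \in x |` P by rewrite !inE eqxx.
    rewrite (fE_none xin Dnone).
    rewrite pick_step_none.
      apply/fsetP => t; rewrite !inE.
      by case: (t =P x) => [->|]; rewrite ?(negbTE xP).
    move=> t; rewrite !inE => /andP [tx tT] ta.
    apply/negPn/negP => tP.
    have tlt : t < x by rewrite ltn_neqAle tx cmax.
    by move: (Dnone t tT tlt); rewrite !inE (negbTE tx) (negbTE tP).
  have xin : x \in x |` P by rewrite !inE eqxx.
  rewrite (@fE_some _ _ _ d xin) //.
  move: dP; rewrite !inE negb_or => /andP [dx' dP].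
  rewrite (@pick_step_some _ _ _ d); last first.
    split; first by rewrite !inE dx' dT.
    - exact: ltn_trans dx ca.
    - by [].
    move=> t; rewrite !inE => /andP [tx tT] ta tP.
    have tlt : t < x by rewrite ltn_neqAle tx cmax.
    by apply: dmax => //; rewrite !inE negb_or tx tP.
  apply/fsetP => t; rewrite !inE.
  case: (t =P x) => [->|]; rewrite ?(negbTE xP) ?orbF //=.
  by rewrite orbC.
rewrite fE_notin; last by rewrite !inE negb_or eq_sym cx.
apply: pick_step_some; split => //; first by rewrite !inE cx.
by move=> t; rewrite !inE => /andP [_ tT]; exact: cmax.
Qed.

Lemma run_inv T x (s : seq nat) :
  foldl (pick_step (T `\ x)) fset0 s = fF T x (foldl (pick_step T) fset0 s).
Proof.
elim/last_ind: s => [|s a IH].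
  by rewrite /= fE_notin // inE.
by rewrite !foldl_rcons IH step_inv.
Qed.

End Helpers.

Theorem lemma4p5 (S T : {fset nat}) (x : nat) :
  pos_set S -> pos_set T -> x \in tri T S ->
  (fset_lt T x `\` tri T S = fset0 ->
     tri (T `\ x) S = tri T S `\ x) /\
  (fset_lt T x `\` tri T S != fset0 ->
     tri (T `\ x) S = (tri T S `\ x) `|` [fset fmax (fset_lt T x `\` tri T S)]).
Proof.
move=> _ _ xP.
have E : tri (T `\ x) S = fF T x (tri T S) by rewrite /tri run_inv.
rewrite E /fF xP /=; split => [-> | /negbTE ->] //.
Qed.
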